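(* For every extreme point $x$ of $\mathbf{S}$ there exists a non-uniformly stable matching $\mu$ in $G$ with $\chi_\mu=x$.
   Context: Setting: $G=(V,E)$ is a finite simple bipartite graph with $V=V_1\sqcup V_2$, every edge joining a vertex of $V_1$ to a vertex of $V_2$; an edge is identified with the set of its two endpoints. $E$ is partitioned into $E_1,E_2$. For $F\subseteq E$ and $v\in V$, $F(v)$ is the set of edges of $F$ incident to $v$. For every $v\in V$ there is a transitive and complete binary relation $\succsim_v$ on $E(v)\cup\{\emptyset\}$ with $e\succsim_v\emptyset$ and $\emptyset\not\succsim_v e$ for all $e\in E(v)$; $\succ_v$ and $\sim_v$ are its strict and indifference parts. A matching is $\mu\subseteq E$ with $|\mu(v)|\le1$ for all $v$; $\mu(v)$ denotes the edge of $\mu$ at $v$, or $\emptyset$. An edge $e\in E\setminus\mu$ weakly blocks $\mu$ if $e\succsim_v\mu(v)$ for every $v\in e$; it strongly blocks $\mu$ if additionally $e\succ_w\mu(w)$ for some $w\in e$. $\mu$ is non-uniformly stable if no edge of $E_1\setminus\mu$ weakly blocks $\mu$ and no edge of $E_2\setminus\mu$ strongly blocks $\mu$. For $x\in\mathbb{R}^E$, $x(F)=\sum_{e\in F}x(e)$; $\chi_F$ is the characteristic vector of $F$. $E[\succ_v e]=\{f\in E(v): f\succ_v e\}$, $E[\sim_v e]=\{f\in E(v): f\sim_v e\}$. $\mathbf{S}$ is the set of $x\in\mathbb{R}_+^E$ with (1) $x(E(v))\le1$ for all $v\in V$; (2) $x(e)+\sum_{v\in e}x(E[\succ_v e])\ge1$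 for all $e\in E_1$; (3) $x(E[\sim_v e])+\sum_{w\in e}x(E[\succ_w e])\ge1$ for all $e\in E_2$, $v\in e$. *)

(* Defs.v *)
From HB Require Import structures.
From mathcomp Require Import all_boot all_order all_algebra.
From mathcomp Require Import reals.
Set Implicit Arguments. Unset Strict Implicit. Unset Printing Implicit Defensive.
Import Order.TTheory GRing.Theory Num.Theory.
Local Open Scope ring_scope.

(* A bipartite graph: vertices V (finType), side predicate inV1,
   edges E (finType) with ends e = (endpoint in V1, endpoint in V2). *)
Section Defs.
Variables (V E : finType) (ends : E -> V * V).

Definition inc (e : E) (v : V) : bool := ((ends e).1 == v) || ((ends e).2 == v).

Definition bipartite_simple (inV1 : pred V) : Prop :=
  (forall e, inV1 (ends e).1 && ~~ inV1 (ends e).2) /\ injective ends.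

(* pref v e f  means  e ≿_v f  (comparison of edges of E(v));
   every edge is strictly preferred to the empty set by convention. *)
Definition pref_ok (pref : V -> rel E) : Prop :=
  forall v,
    (forall e f, inc e v -> inc f v -> pref v e f || pref v f e) /\
    (forall e f g, inc e v -> inc f v -> inc g v ->
        pref v e f -> pref v f g -> pref v e g).

Definition spref (pref : V -> rel E) v e f := pref v e f && ~~ pref v f e.
Definition ipref (pref : V -> rel E) v e f := pref v e f && pref v f e.

Definition matching (mu : {set E}) : Prop :=
  forall v, (#|[set e in mu | inc e v]| <= 1)%N.

Definition mu_at (mu : {set E}) (v : V) : option E := [pick e in mu | inc e v].

Definition geq_opt (pref : V -> rel E) v e (o : option E) : bool :=
  if o is Some f then pref v e f else true.
Definition gt_opt (pref : V -> rel E) v e (o : option E) : bool :=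
  if o is Some f then spref pref v e f else true.

Definition weakly_blocks pref (mu : {set E}) (e : E) : Prop :=
  e \notin mu /\ forall v, inc e v -> geq_opt pref v e (mu_at mu v).

Definition strongly_blocks pref (mu : {set E}) (e : E) : Prop :=
  weakly_blocks pref mu e /\ exists w, inc e w /\ gt_opt pref w e (mu_at mu w).

(* E1 is given as a set; E2 is its complement *)
Definition nonuniformly_stable pref (E1 : {set E}) (mu : {set E}) : Prop :=
  matching mu /\
  (forall e, e \in E1 -> ~ weakly_blocks pref mu e) /\
  (forall e, e \notin E1 -> ~ strongly_blocks pref mu e).

Variable R : realType.

Definition inS pref (E1 : {set E}) (x : E -> R) : Prop :=
  (forall e, 0 <= x e) /\
  (forall v, \sum_(e | inc e v) x e <= 1) /\
  (forall e, e \in E1 ->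
     x e + \sum_(v | inc e v) \sum_(f | inc f v && spref pref v f e) x f >= 1) /\
  (forall e v, e \notin E1 -> inc e v ->
     \sum_(f | inc f v && ipref pref v f e) x f
     + \sum_(w | inc e w) \sum_(f | inc f w && spref pref w f e) x f >= 1).

Definition extreme_point pref E1 (x : E -> R) : Prop :=
  inS pref E1 x /\
  forall (y z : E -> R) (t : R), inS pref E1 y -> inS pref E1 z ->
    0 < t < 1 -> (forall e, x e = t * y e + (1 - t) * z e) ->
    forall e, y e = z e.

End Defs.

(* Main.v *)
Require Import Defs.
From HB Require Import structures.
From mathcomp Require Import all_boot all_order all_algebra.
From mathcomp Require Import reals ring lra zify.
Import Order.TTheory GRing.Theory Num.Theory.
Local Open Scope ring_scope.
Set Implicit Arguments. Unset Strict Implicit. Unset Printing Implicit Defensive.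

Lemma kernel_nz (R : realType) (I J : finType) (Js : {set J}) (c : J -> I -> R) :
  (#|Js| < #|I|)%N -> exists u : I -> R, (exists i, u i != 0) /\
     (forall j, j \in Js -> \sum_i c j i * u i = 0).
Proof.
move=> Hc.
pose A := \matrix_(k < #|I|, l < #|Js|) c (enum_val l) (enum_val k).
have HK : kermx A != 0.
  rewrite -mxrank_eq0 mxrank_ker subn_eq0 -ltnNge.
  exact: leq_ltn_trans (rank_leq_col A) Hc.
have [i0 [k0 Hk]] : exists i0 k0, kermx A i0 k0 != 0.
  case: (pickP (fun p : 'I__ * 'I__ => kermx A p.1 p.2 != 0)) => [[i0 k0] H | H].
    by exists i0, k0.
  exfalso; move/eqP: HK; apply; apply/matrixP => i k; rewrite [RHS]mxE.
  by have := H (i, k); rewrite /= => /negbFE/eqP.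
exists (fun y => kermx A i0 (enum_rank y)); split.
  by exists (enum_val k0); rewrite enum_valK.
move=> j Hj.
have := congr1 (fun M : 'M[R]_(#|I|, #|Js|) => M i0 (enum_rank_in Hj j)) (mulmx_ker A).
rewrite !mxE => H; rewrite -[RHS]H.
rewrite (reindex (@enum_val I predT)) /=; last first.
  by exists (@enum_rank I) => y _; rewrite ?enum_valK ?enum_rankK.
by apply: eq_bigr => k _; rewrite [A k _]mxE enum_rankK_in // enum_valK mulrC.
Qed.

Lemma exists_max (E : finType) (A : {set E}) (r : rel E) :
  (forall a b c, a \in A -> b \in A -> c \in A -> r a b -> r b c -> r a c) ->
  (forall a, ~~ r a a) -> forall e0, e0 \in A ->
  exists2 e, e \in A & forall f, f \in A -> ~~ r f e.
Proof.
move=> Htr Hirr e0 He0.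
case: (arg_maxnP (fun e => #|[set h in A | r e h]|) He0) => e He Hmax.
exists e => // f Hf; apply/negP => Hfe.
have := Hmax f Hf; rewrite /= leqNgt => /negP; apply; apply: proper_card.
apply/properP; split.
  apply/subsetP => h; rewrite !inE => /andP [Hh Heh]; rewrite Hh /=.
  exact: Htr Hfe Heh.
exists e; rewrite in_set; first by apply/andP; split.
by rewrite (negbTE (Hirr e)) andbF.
Qed.

Section Pf.
Variables (R : realType) (V E : finType) (ends : E -> V * V)
  (inV1 : pred V) (E1 : {set E}) (pref : V -> rel E).
Hypothesis Hbip : bipartite_simple ends inV1.
Hypothesis Hpref : pref_ok ends pref.

Local Notation inc := (inc ends).
Local Notation spref := (spref pref).
Local Notation ipref := (ipref pref).

Definition Xs (x : E -> R) v := \sum_(e | inc e v) x e.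
Definition Us (x : E -> R) v g := \sum_(f | inc f v && spref v f g) x f.
Definition Ts (x : E -> R) v g := \sum_(f | inc f v && ipref v f g) x f.

Lemma inV1a e : inV1 (ends e).1. Proof. by case: Hbip => H _; case/andP: (H e). Qed.
Lemma ninV1b e : ~~ inV1 (ends e).2. Proof. by case: Hbip => H _; case/andP: (H e). Qed.
Lemma ab_neq e : (ends e).1 != (ends e).2.
Proof. by apply/eqP => H; move: (inV1a e); rewrite H (negbTE (ninV1b e)). Qed.

Lemma inc_a e : inc e (ends e).1. Proof. by rewrite /Defs.inc eqxx. Qed.
Lemma inc_b e : inc e (ends e).2. Proof. by rewrite /Defs.inc eqxx orbT. Qed.

Lemma inc1 e v : inc e v -> inV1 v -> (ends e).1 = v.
Proof.
case/orP => /eqP H // Hv; by move: (ninV1b e); rewrite H Hv.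
Qed.
Lemma inc2 e v : inc e v -> ~~ inV1 v -> (ends e).2 = v.
Proof.
case/orP => /eqP H // Hv; by move: (inV1a e); rewrite H (negbTE Hv).
Qed.

Lemma sum_inc e (F : V -> R) :
  \sum_(v | inc e v) F v = F (ends e).1 + F (ends e).2.
Proof.
rewrite (bigD1 (ends e).1) ?inc_a //= (bigD1 (ends e).2) /=; last first.
  by rewrite inc_b eq_sym ab_neq.
rewrite big1 ?addr0 // => v /andP [/andP [Hi H1] H2].
by move: Hi H1 H2; rewrite /Defs.inc => /orP [] /eqP -> ; rewrite eqxx.
Qed.

Lemma pref_tot v e f : inc e v -> inc f v -> pref v e f || pref v f e.
Proof. by case: (Hpref v) => H _; apply: H. Qed.
Lemma pref_refl v e : inc e v -> pref v e e.
Proof. by move=> H; have := pref_tot H H; rewrite orbb. Qed.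
Lemma pref_trans v e f g : inc e v -> inc f v -> inc g v ->
  pref v e f -> pref v f g -> pref v e g.
Proof. by case: (Hpref v) => _ H; apply: H. Qed.

Lemma ipref_refl v e : inc e v -> ipref v e e.
Proof. by move=> H; rewrite /Defs.ipref pref_refl. Qed.
Lemma ipref_sym v e f : ipref v e f = ipref v f e.
Proof. by rewrite /Defs.ipref andbC. Qed.
Lemma ipref_trans v e f g : inc e v -> inc f v -> inc g v ->
  ipref v e f -> ipref v f g -> ipref v e g.
Proof.
move=> He Hf Hg /andP [H1 H2] /andP [H3 H4]; apply/andP; split.
  exact: (pref_trans He Hf Hg).
exact: (pref_trans Hg Hf He).
Qed.
Lemma spref_irr v e : ~~ spref v e e.
Proof. by rewrite /Defs.spref andbN. Qed.
Lemma spref_asym v e f : spref v e f -> ~~ spref v f e.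
Proof. by case/andP => H1 H2; rewrite /Defs.spref H1 andbF. Qed.
Lemma spref_ipref v e f : spref v e f -> ~~ ipref v e f.
Proof. by case/andP => H1 H2; rewrite /Defs.ipref (negbTE H2) andbF. Qed.
Lemma spref_ipref' v e f : spref v e f -> ~~ ipref v f e.
Proof. by move=> H; rewrite ipref_sym spref_ipref. Qed.

Lemma trich v e f : inc e v -> inc f v ->
  spref v e f || ipref v e f || spref v f e.
Proof.
move=> He Hf; rewrite /Defs.spref /Defs.ipref.
by case: (pref v e f) (pref v f e) (pref_tot He Hf) => [] [].
Qed.

Lemma spref_trans v e f g : inc e v -> inc f v -> inc g v ->
  spref v e f -> spref v f g -> spref v e g.
Proof.
move=> He Hf Hg /andP [H1 H2] /andP [H3 H4]; apply/andP; split.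
  exact: (pref_trans He Hf Hg).
apply/negP => H5; move/negP: H2; apply; exact: (pref_trans Hf Hg He).
Qed.
Lemma spref_ipref_trans v e f g : inc e v -> inc f v -> inc g v ->
  spref v e f -> ipref v f g -> spref v e g.
Proof.
move=> He Hf Hg /andP [H1 H2] /andP [H3 H4]; apply/andP; split.
  exact: (pref_trans He Hf Hg).
apply/negP => H5; move/negP: H2; apply; exact: (pref_trans Hf Hg He).
Qed.
Lemma ipref_spref_trans v e f g : inc e v -> inc f v -> inc g v ->
  ipref v e f -> spref v f g -> spref v e g.
Proof.
move=> He Hf Hg /andP [H1 H2] /andP [H3 H4]; apply/andP; split.
  exact: (pref_trans He Hf Hg).
apply/negP => H5; move/negP: H4; apply; exact: (pref_trans Hg He Hf).
Qed.
Lemma not_spref_ipref v e f : inc e v -> inc f v ->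
  ~~ spref v f e -> ~~ ipref v f e -> spref v e f.
Proof.
move=> He Hf H1 H2; have := trich Hf He; rewrite (negbTE H1) (negbTE H2) //.
Qed.

Lemma sum_cond (P Q : pred E) (F : E -> R) :
  \sum_(f | P f && Q f) F f = \sum_(f | P f) F f * (Q f)%:R.
Proof.
rewrite big_mkcondr; apply: eq_bigr => f _.
by case: (Q f); rewrite ?mulr1 ?mulr0.
Qed.

Lemma quad x v :
  \sum_(e | inc e v) x e * (Ts x v e + 2 * Us x v e) = Xs x v ^+ 2.
Proof.
pose w e f := (ipref v f e)%:R + 2 * (spref v f e)%:R : R.
have E0 : \sum_(e | inc e v) x e * (Ts x v e + 2 * Us x v e) =
   \sum_(e | inc e v) \sum_(f | inc f v) x e * x f * w e f.
  apply: eq_bigr => e He; rewrite /Ts /Us !sum_cond [2 * _]mulr_sumr.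
  rewrite -big_split /= mulr_sumr; apply: eq_bigr => f Hf.
  by rewrite /w; ring.
have Hw : forall e f, inc e v -> inc f v -> w e f + w f e = 2.
  move=> e f He Hf; rewrite /w.
  have := trich He Hf; have := @spref_asym v e f; have := @spref_ipref v e f.
  have := @spref_ipref v f e; rewrite [ipref v f e]ipref_sym.
  case: (spref v e f); case: (spref v f e); case: (ipref v e f) => /= A B C D;
   first [ by move: (A isT) | by move: (B isT) | by move: (C isT) | by [] | ring ].
have E2 : 2 * (\sum_(e | inc e v) \sum_(f | inc f v) x e * x f * w e f) =
   2 * Xs x v ^+ 2.
  rewrite mulr2n mulrDl mul1r.
  rewrite [X in X + _ = _](exchange_big).
  rewrite /= -big_split /= expr2 /Xs big_distrl /= mulr_sumr.
  apply: eq_bigr => e He; rewrite -big_split /= big_distrr /= mulr_sumr.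
  apply: eq_bigr => f Hf.
  rewrite (mulrC (x f)) -mulrDr [w f e + w e f]addrC (Hw e f He Hf).
  ring.
rewrite E0; apply: (mulfI (x := 2)); first by rewrite pnatr_eq0.
exact: E2.
Qed.

Definition nonneg (x : E -> R) := forall e, 0 <= x e.

Lemma Ts_ge x v e : nonneg x -> inc e v -> x e <= Ts x v e.
Proof.
move=> H0 He; rewrite /Ts (bigD1 e) /=; last by rewrite He ipref_refl.
by rewrite lerDl sumr_ge0.
Qed.

Lemma Xs_ge x v e : nonneg x -> inc e v -> x e <= Xs x v.
Proof.
move=> H0 He; rewrite /Xs (bigD1 e) //=.
by rewrite lerDl sumr_ge0.
Qed.

Lemma sum_ge0' (P : pred E) x : nonneg x -> 0 <= \sum_(e | P e) x e.
Proof. by move=> H; apply: sumr_ge0. Qed.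

Lemma swap_inc (F : E -> V -> R) :
  \sum_e \sum_(v | inc e v) F e v = \sum_v \sum_(e | inc e v) F e v.
Proof.
rewrite (exchange_big_dep xpredT) //=.
Qed.

Definition SU x e := Us x (ends e).1 e + Us x (ends e).2 e.

Lemma inS_unf x : inS ends pref E1 x <->
  [/\ nonneg x, (forall v, Xs x v <= 1),
   (forall e, e \in E1 -> 1 <= x e + SU x e) &
   (forall e v, e \notin E1 -> inc e v -> 1 <= Ts x v e + SU x e)].
Proof.
rewrite /inS /SU; split.
  case=> [H0 [H1 [H2 H3]]]; split => //.
    by move=> e He; have := H2 e He; rewrite sum_inc.
  by move=> e v He Hv; have := H3 e v He Hv; rewrite sum_inc.
case=> H0 H1 H2 H3; split => //; split => //; split.
  by move=> e He; rewrite sum_inc; apply: H2.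
by move=> e v He Hv; rewrite sum_inc; apply: H3.
Qed.

Lemma phase1 x : inS ends pref E1 x ->
  (forall v, Xs x v = 0 \/ Xs x v = 1) /\
  (forall e, 0 < x e ->
     [/\ Ts x (ends e).1 e = Ts x (ends e).2 e,
         Ts x (ends e).1 e + SU x e = 1 &
         e \in E1 -> Ts x (ends e).1 e = x e]).
Proof.
move/inS_unf=> [H0 H1 H2 H3].
pose Q e := (Ts x (ends e).1 e + 2 * Us x (ends e).1 e) +
            (Ts x (ends e).2 e + 2 * Us x (ends e).2 e).
have HQ : forall e, 2 <= Q e.
  move=> e; rewrite /Q; case: (boolP (e \in E1)) => He.
    have := H2 e He; have := Ts_ge H0 (inc_a e).
    have := Ts_ge H0 (inc_b e); rewrite /SU => *; lra.
  have := H3 e _ He (inc_a e); have := H3 e _ He (inc_b e); rewrite /SU => *.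
  lra.
have Hid : \sum_e x e * (Q e - 2) = \sum_v (Xs x v ^+ 2 - Xs x v).
  have A : \sum_v Xs x v ^+ 2 = \sum_e x e * Q e.
    rewrite -(eq_bigr _ (fun v _ => quad x v)) -swap_inc.
    by apply: eq_bigr => e _; rewrite sum_inc /Q; ring.
  have B : \sum_v Xs x v = \sum_e x e * 2.
    rewrite /Xs -swap_inc; apply: eq_bigr => e _; rewrite sum_inc; ring.
  by rewrite sumrB A B -sumrB; apply: eq_bigr => e _; ring.
have Hl : forall e, 0 <= x e * (Q e - 2).
  by move=> e; apply: mulr_ge0 => //; rewrite subr_ge0.
have Hr : forall v, 0 <= Xs x v - Xs x v ^+ 2.
  move=> v; have : 0 <= Xs x v by apply: sum_ge0'.
  have := H1 v; move=> A B; rewrite expr2; nra.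
have Hs : \sum_v (Xs x v - Xs x v ^+ 2) = 0.
  apply/eqP; rewrite eq_le sumr_ge0 // andbT.
  have : 0 <= \sum_e x e * (Q e - 2) by apply: sumr_ge0.
  rewrite Hid !sumrB; lra.
have HV : forall v, Xs x v = 0 \/ Xs x v = 1.
  move=> v; have := psumr_eq0P (fun v _ => Hr v) Hs (i := v) isT.
  move/eqP; rewrite expr2 -{1}(mulr1 (Xs x v)) -mulrBr mulf_eq0 subr_eq0.
  by case/orP => /eqP ->; [left | right].
have He0 : \sum_e x e * (Q e - 2) = 0.
  rewrite Hid.
  have -> : \sum_v (Xs x v ^+ 2 - Xs x v) = - \sum_v (Xs x v - Xs x v ^+ 2).
    by rewrite -sumrN; apply: eq_bigr => v _; ring.
  by rewrite Hs oppr0.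
split => // e Hx.
have := psumr_eq0P (fun e _ => Hl e) He0 (i := e) isT.
move/eqP; rewrite mulf_eq0 (negbTE (lt0r_neq0 Hx)) /= subr_eq0 => /eqP HQe.
move: HQe; rewrite /Q => HQe.
case: (boolP (e \in E1)) => He.
  have := H2 e He; have := Ts_ge H0 (inc_a e).
  have := Ts_ge H0 (inc_b e); rewrite /SU => *.
  split; [lra | lra | move=> _; lra].
have := H3 e _ He (inc_a e); have := H3 e _ He (inc_b e); rewrite /SU => *.
split; try lra; by rewrite He.
Qed.

Definition endp (s : bool) g := if s then (ends g).1 else (ends g).2.
Definition eqv (s : bool) : rel E :=
  fun h h' => (endp s h == endp s h') && ipref (endp s h) h h'.

Lemma inc_endp s g : inc g (endp s g).
Proof. by case: s; rewrite /endp ?inc_a ?inc_b. Qed.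
Lemma endp_inc s g v : inc g v -> inV1 v = s -> endp s g = v.
Proof.
move=> Hg <-; rewrite /endp; case: ifP => Hv; first exact: inc1.
by apply: inc2 => //; rewrite Hv.
Qed.

Lemma eqv_refl s h : eqv s h h.
Proof. by rewrite /eqv eqxx ipref_refl ?inc_endp. Qed.
Lemma eqv_sym s h h' : eqv s h h' = eqv s h' h.
Proof.
rewrite /eqv eq_sym; case: eqP => //= ->; exact: ipref_sym.
Qed.
Lemma eqv_trans s h1 h2 h3 : eqv s h1 h2 -> eqv s h2 h3 -> eqv s h1 h3.
Proof.
rewrite /eqv => /andP [/eqP E12 I12] /andP [/eqP E23 I23].
rewrite -E12 in I23; rewrite E12 E23 eqxx /=; rewrite E12 E23 in I12 *.
rewrite -E23 in I23 *.
have H1 : inc h1 (endp s h2) by rewrite -E12 inc_endp.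
have H3 : inc h3 (endp s h2) by rewrite E23 inc_endp.
rewrite -E23 in I12; rewrite E12 in I23.
exact: (ipref_trans H1 (inc_endp s h2) H3 I12 I23).
Qed.
Lemma eqv_equiv s : equivalence_rel (eqv s).
Proof.
move=> x y z; split; first exact: eqv_refl.
move=> Hxy; apply/idP/idP => H.
  by apply: eqv_trans H; rewrite eqv_sym.
exact: eqv_trans Hxy H.
Qed.

Lemma Ts_eq x v h g : inc h v -> inc g v -> ipref v h g -> Ts x v h = Ts x v g.
Proof.
move=> Hh Hg Hhg; apply: eq_bigl => f; apply: andb_id2l => Hf.
apply/idP/idP => H; first exact: (ipref_trans Hf Hh Hg).
by apply: (ipref_trans Hf Hg Hh) => //; rewrite ipref_sym.
Qed.

Lemma lin_sum (Q : pred E) (x u : E -> R) (k : R) :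
  \sum_(h | Q h) (x h + k * u h) = \sum_(h | Q h) x h + k * \sum_(h | Q h) u h.
Proof. by rewrite big_split /= mulr_sumr. Qed.

Definition closed_sum0 (u : E -> R) := forall v (P : pred E),
  (forall h g, inc h v -> inc g v -> ipref v h g -> P g -> P h) ->
  \sum_(h | inc h v && P h) u h = 0.

Lemma perturb (x u : E -> R) (k : R) : inS ends pref E1 x -> closed_sum0 u ->
  (forall e, e \in E1 -> u e = 0) ->
  (forall e, 0 <= x e + k * u e) ->
  inS ends pref E1 (fun e => x e + k * u e).
Proof.
move=> /inS_unf [H0 H1 H2 H3] Hc HE1 Hnn.
have HX : forall v, Xs u v = 0.
  move=> v; transitivity (\sum_(h | inc h v && xpredT h) u h).
    by apply: eq_bigl => h /=; rewrite andbT.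
  exact: Hc.
have HU : forall v g, inc g v -> Us u v g = 0.
  move=> v g Hg; apply: (Hc v (fun h => spref v h g)) => h f Hh Hf Hhf Hfg.
  exact: (ipref_spref_trans Hh Hf Hg Hhf Hfg).
have HT : forall v g, inc g v -> Ts u v g = 0.
  move=> v g Hg; apply: (Hc v (fun h => ipref v h g)) => h f Hh Hf Hhf Hfg.
  exact: (ipref_trans Hh Hf Hg Hhf Hfg).
have HSU : forall e, SU (fun e => x e + k * u e) e = SU x e.
  move=> e; rewrite /SU /Us !lin_sum -/(Us u _ e) -/(Us u _ e).
  by rewrite !HU ?inc_a ?inc_b // !mulr0 !addr0.
apply/inS_unf; split => //.
- move=> v; rewrite /Xs lin_sum -/(Xs u v) HX mulr0 addr0; exact: H1.
- by move=> e He; rewrite HSU HE1 // mulr0 addr0; apply: H2.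
- move=> e v He Hv; rewrite HSU /Ts lin_sum -/(Ts u v e) HT // mulr0 addr0.
  exact: H3.
Qed.

Lemma inV1_endp s g : inV1 (endp s g) = s.
Proof. by case: s; rewrite /endp ?inV1a // (negbTE (ninV1b g)). Qed.

Lemma inc_endp_eq s h v : inV1 v = s -> inc h v = (endp s h == v).
Proof.
move=> Hv; apply/idP/eqP => [H | <-]; first exact: endp_inc.
exact: inc_endp.
Qed.

Lemma Ts_two x v g h : nonneg x -> inc g v -> inc h v -> ipref v h g -> h != g ->
  x g + x h <= Ts x v g.
Proof.
move=> H0 Hg Hh Hhg Hne; rewrite /Ts (bigD1 g) /=; last by rewrite Hg ipref_refl.
rewrite (bigD1 h) /=; last by rewrite Hh Hhg Hne.
by rewrite addrA lerDl sumr_ge0.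
Qed.

Lemma sum_delta (u : E -> R) e : \sum_i (i == e)%:R * u i = u e.
Proof.
rewrite (bigD1 e) //= eqxx mul1r big1 ?addr0 // => i /negbTE ->.
by rewrite mul0r.
Qed.

Lemma sum_ind (u : E -> R) (C : {set E}) : \sum_i (i \in C)%:R * u i = \sum_(i in C) u i.
Proof.
by rewrite [RHS]big_mkcond; apply: eq_bigr => i _; case: (i \in C); rewrite ?mul1r ?mul0r.
Qed.

Lemma phase2 x : extreme_point ends pref E1 x ->
  forall g, 0 < x g -> Ts x (ends g).1 g = x g.
Proof.
case=> HS Hext.
have [HX Ht] := phase1 HS.
have [H0 H1 H2 H3] := (inS_unf x).1 HS.
have TT : forall s g, 0 < x g -> Ts x (endp s g) g = Ts x (ends g).1 g.
  by move=> [] g Hg //=; rewrite /endp; case: (Ht g Hg) => ->.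
pose F := [set g | (0 < x g) && (x g < Ts x (ends g).1 g)].
have FE1 : forall e, e \in E1 -> e \notin F.
  move=> e He; rewrite inE; apply/negP => /andP [Hp Hl].
  by case: (Ht e Hp) => _ _ /(_ He) Hq; rewrite Hq ltxx in Hl.
have Fin : forall s g h, g \in F -> eqv s g h -> 0 < x h -> h \in F.
  move=> s g h Hg Hgh Hh; case: (eqVneq h g) => [-> // | Hne].
  rewrite inE Hh /= -(TT s h Hh).
  move: Hgh => /andP [/eqP Egh Igh].
  have Hhw : inc h (endp s g) by rewrite Egh inc_endp.
  rewrite -Egh (Ts_eq x Hhw (inc_endp s g)); last by rewrite ipref_sym.
  have := Ts_two H0 (inc_endp s g) Hhw (ltac:(by rewrite ipref_sym)) Hne.
  move: Hg; rewrite inE => /andP [Hg _]; lra.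
have partner : forall s g, g \in F -> exists h, [/\ h != g, eqv s g h & h \in F].
  move=> s g HgF; have := HgF; rewrite inE => /andP [Hg Hlt].
  set w := endp s g; have Hlt' : x g < Ts x w g by rewrite /w TT.
  case: (pickP [pred f | [&& inc f w, ipref w f g, f != g & 0 < x f]]) =>
     [h /and4P [Hh1 Hh2 Hh3 Hh4] | Hn].
    have Egh : eqv s g h.
      rewrite /eqv (endp_inc Hh1 (inV1_endp s g)) eqxx /=; by rewrite ipref_sym.
    by exists h; split => //; apply: Fin Egh Hh4.
  exfalso; move: Hlt'; rewrite /Ts (bigD1 g) /=; last by rewrite inc_endp ipref_refl ?inc_endp.
  rewrite big1 ?addr0 ?ltxx // => f /andP [/andP [Hf1 Hf2] Hf3].
  have := Hn f; rewrite /= Hf1 Hf2 Hf3 /= => /negbT; rewrite -leNgt => Hle.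
  by apply/eqP; rewrite eq_le Hle H0.
pose CL s := equivalence_partition (eqv s) F.
have Hpart : forall s, partition (CL s) F.
  by move=> s; apply: equivalence_partitionP => a b c _ _ _; apply: eqv_equiv.
have HCL : forall s C, C \in CL s -> exists2 g, g \in F & C = [set y in F | eqv s g y].
  by move=> s C /imsetP [g Hg ->]; exists g.
have Ccard : forall s C, C \in CL s -> (2 <= #|C|)%N.
  move=> s C /HCL [g Hg ->]; apply/card_gt1P.
  have [h [Hne Egh HhF]] := partner s g Hg.
  exists g, h; split; first by rewrite in_set Hg eqv_refl.
    by rewrite in_set HhF Egh.
  by rewrite eq_sym.
have CLcard : forall s, (2 * #|CL s| <= #|F|)%N.
  move=> s; rewrite (card_partition (Hpart s)) mulnC -sum_nat_const.
  by apply: leq_sum => C HC; apply: Ccard HC.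
move=> g0 Hg0; apply/eqP; rewrite eq_le Ts_ge ?inc_a // andbT leNgt.
apply/negP => Hlt.
have Hg0F : g0 \in F by rewrite inE Hg0 Hlt.
pose C0 := [set y in F | eqv false g0 y].
have C0in : C0 \in CL false by apply/imsetP; exists g0.
have C0nin : C0 \notin CL true.
  apply/negP => /HCL [g1 Hg1 EC].
  have [h [Hne Egh HhF]] := partner false g0 Hg0F.
  have Hh : h \in C0 by rewrite inE HhF.
  have Hg : g0 \in C0 by rewrite inE Hg0F eqv_refl.
  rewrite EC !inE in Hh Hg.
  move: Hh Hg Egh => /andP [_ /andP [/eqP E1h _]] /andP [_ /andP [/eqP E1g _]].
  move=> /andP [/eqP E2 _].
  move/negP: Hne; apply; apply/eqP.
  case: Hbip => _ Hinj; apply: Hinj.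
  move: E1h E1g E2; rewrite /endp => E1h E1g E2.
  by rewrite [ends h]surjective_pairing [ends g0]surjective_pairing -E1h -E1g E2.
pose CLU := CL true :|: CL false.
pose J := (E + {set E})%type.
pose Js : {set J} := [set inl e | e in ~: F] :|: [set inr C | C in CLU :\ C0].
pose c (j : J) (i : E) : R := match j with inl e => (i == e)%:R | inr C => (i \in C)%:R end.
have Hcard : (#|Js| < #|E|)%N.
  have A1 := (leq_card_setU [set (@inl E {set E}) e | e in ~: F] [set (@inr E {set E}) C | C in CLU :\ C0]).1.
  have A2 := leq_imset_card (@inl E {set E}) (~: F).
  have A3 := leq_imset_card (@inr E {set E}) (CLU :\ C0).
  have A4 := cardsC F.
  have A10 : C0 \in CLU by rewrite inE C0in orbT.
  have A5 : #|CLU| = (#|CLU :\ C0|).+1 by rewrite (cardsD1 C0 CLU) A10.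
  have A6 : (#|CLU| <= #|CL true| + #|CL false|)%N := (leq_card_setU _ _).1.
  have A7 := CLcard true; have A8 := CLcard false.
  have A9 : #|F| = (#|F :\ g0|).+1 by rewrite (cardsD1 g0 F) Hg0F.
  rewrite /Js; apply: leq_ltn_trans A1 _; apply: leq_ltn_trans (leq_add A2 A3) _.
  lia.
have [u [[i0 Hi0] Hu]] := kernel_nz c Hcard.
have U0 : forall e, e \notin F -> u e = 0.
  move=> e He; rewrite -(sum_delta u e); apply: (Hu (inl e)).
  by apply/setUP; left; apply/imsetP; exists e => //; rewrite in_setC.
have UC : forall C, C \in CLU -> C != C0 -> \sum_(i in C) u i = 0.
  move=> C HC HC0; rewrite -sum_ind; apply: (Hu (inr C)).
  by apply/setUP; right; apply/imsetP; exists C => //; rewrite in_setD1 HC0.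
have Hdep : forall s, \sum_(i in F) u i = \sum_(C in CL s) \sum_(i in C) u i.
  move=> s; rewrite -{1}(cover_partition (Hpart s)) big_trivIset //.
  by case/and3P: (Hpart s).
have UCall : forall s C, C \in CL s -> \sum_(i in C) u i = 0.
  have SF : \sum_(i in F) u i = 0.
    rewrite (Hdep true) big1 // => C HC; apply: UC; first by rewrite inE HC.
    by apply/eqP => EC; rewrite -EC HC in C0nin.
  have S0 : \sum_(i in C0) u i = 0.
    move: SF; rewrite (Hdep false) (bigD1 C0) //= [X in _ + X]big1 ?addr0 //.
    move=> C /andP [HC HC0].
    by apply: UC; rewrite // inE HC orbT.
  move=> s C HC; case: (eqVneq C C0) => [-> // | HC0].
  by apply: UC; rewrite // inE; case: s HC => ->; rewrite ?orbT.
have Hcl : closed_sum0 u.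
  move=> v P HP; set s := inV1 v.
  rewrite big_mkcond (bigID (fun h => h \in F)) /= [X in _ + X]big1 ?addr0; last first.
    by move=> h Hh; rewrite U0 //; case: ifP.
  rewrite -(cover_partition (Hpart s)) big_trivIset; last by case/and3P: (Hpart s).
  apply: big1 => C HC; have := HC; move/HCL => [g Hg EC].
  have key : forall h, h \in C -> (inc h v && P h) = (inc g v && P g).
    move=> h; rewrite EC inE => /andP [_ /andP [/eqP Egh Igh]].
    rewrite !(inc_endp_eq _ (erefl s)) -Egh.
    case: eqP => //= Ew; rewrite Ew in Igh.
    have Hgv : inc g v by rewrite -Ew inc_endp.
    have Hhv : inc h v by rewrite -Ew Egh inc_endp.
    apply/idP/idP => HPx; first exact: (HP g h Hgv Hhv Igh HPx).
    by apply: (HP h g Hhv Hgv) => //; rewrite ipref_sym.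
  case Hgv: (inc g v && P g).
    transitivity (\sum_(i in C) u i); last exact: UCall s C HC.
    by apply: eq_bigr => h Hh; rewrite key // Hgv.
  by apply: big1 => h Hh; rewrite key // Hgv.
pose S := \sum_(e in F) `|u e| / x e.
have HS0 : 0 <= S by apply: sumr_ge0 => e _; apply: divr_ge0.
pose eps := (1 + S)^-1.
have Heps : 0 < eps by rewrite invr_gt0; lra.
have Hbnd : forall e, eps * `|u e| <= x e.
  move=> e; case: (boolP (e \in F)) => He; last by rewrite U0 // normr0 mulr0.
  have Hx : 0 < x e by move: He; rewrite inE => /andP [].
  have Hs : `|u e| / x e <= S.
    by rewrite /S (bigD1 e) //= lerDl sumr_ge0 // => f _; apply: divr_ge0.
  rewrite mulrC ler_pdivrMr; last lra.
  have : `|u e| <= S * x e.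
    by rewrite -ler_pdivrMr.
  nra.
have Hnn : forall e (k : R), (k = eps \/ k = - eps) -> 0 <= x e + k * u e.
  move=> e k Hk; have := Hbnd e; have := ler_norm (u e); have := ler_norm (- u e).
  rewrite normrN; case: Hk => -> *; nra.
have HE1 : forall e, e \in E1 -> u e = 0 by move=> e He; apply: U0; apply: FE1.
have Hy := perturb HS Hcl HE1 (fun e => Hnn e eps (or_introl erefl)).
have Hz := perturb HS Hcl HE1 (fun e => Hnn e (- eps) (or_intror erefl)).
have Hyz : forall e, x e + eps * u e = x e + - eps * u e.
  apply: (Hext _ _ (1 / 2) Hy Hz); first by apply/andP; split; lra.
  by move=> e /=; rewrite mulNr; lra.
have Hi := Hyz i0.
have : eps * u i0 = 0 by lra.
move/eqP; rewrite mulf_eq0 (negbTE Hi0) orbF => /eqP He; lra.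
Qed.

Definition Ls (x : E -> R) v g := \sum_(f | inc f v && spref v g f) x f.

Lemma part (x : E -> R) v g : inc g v -> Xs x v = Us x v g + Ts x v g + Ls x v g.
Proof.
move=> Hg; rewrite /Xs (bigID (fun f => spref v f g)) /=.
rewrite [X in _ + X](bigID (fun f => ipref v f g)) /= addrA; congr (_ + _ + _).
- apply: eq_bigl => f; case Hf: (inc f v) => //=.
  case H: (ipref v f g); rewrite ?andbT ?andbF //=.
  by apply/negP => Hs; move: (spref_ipref Hs); rewrite H.
- apply: eq_bigl => f; case Hf: (inc f v) => //=.
  apply/idP/idP => [/andP [H1 H2] | H].
    exact: not_spref_ipref.
  by rewrite (negbTE (spref_asym H)) /= ipref_sym (negbTE (spref_ipref H)).
Qed.

Lemma term_le (x : E -> R) v (Q : pred E) f : nonneg x -> inc f v -> Q f ->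
  x f <= \sum_(h | inc h v && Q h) x h.
Proof.
move=> H0 Hf HQ; rewrite (bigD1 f) /=; last by rewrite Hf HQ.
by rewrite lerDl sumr_ge0.
Qed.

Lemma sum0_terms (x : E -> R) v (Q : pred E) :
  (forall f, inc f v -> Q f -> x f = 0) -> \sum_(h | inc h v && Q h) x h = 0.
Proof. by move=> H; apply: big1 => f /andP [Hf HQ]; apply: H. Qed.

Section P3.
Variable x : E -> R.
Hypothesis HS : inS ends pref E1 x.
Hypothesis HT : forall g, 0 < x g -> Ts x (ends g).1 g = x g.

Let H0 : nonneg x. Proof. by case: ((inS_unf x).1 HS). Qed.
Let HX : forall v, Xs x v = 0 \/ Xs x v = 1. Proof. by case: (phase1 HS). Qed.
Let Ht e : 0 < x e -> Ts x (ends e).2 e = x e /\ x e + SU x e = 1.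
Proof.
move=> He; case: (phase1 HS) => _ /(_ e He) [A B _].
by rewrite -A HT //; split => //; rewrite -(HT He).
Qed.

Lemma TsV v e : inc e v -> 0 < x e -> Ts x v e = x e.
Proof.
move=> Hv He; case/orP: Hv => /eqP <-; first exact: HT.
by case: (Ht He).
Qed.

Lemma no_tie v e f : inc e v -> inc f v -> 0 < x e -> 0 < x f -> ipref v f e -> f = e.
Proof.
move=> He Hf Hxe Hxf Hfe; apply/eqP; apply/negP => /negP Hne.
have := Ts_two H0 He Hf Hfe Hne; rewrite TsV //; lra.
Qed.

Lemma Xs_zero v : Xs x v = 0 -> forall f, inc f v -> x f = 0.
Proof. move=> HXv f Hf; exact: (psumr_eq0P (fun f _ => H0 f) HXv). Qed.

Lemma Xs_one v f : inc f v -> 0 < x f -> Xs x v = 1.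
Proof.
move=> Hf Hxf; case: (HX v) => // HXv.
by have := Xs_zero HXv Hf; lra.
Qed.

Definition mu0 := [set e | (0 < x e) && (Us x (ends e).1 e == 0)].

Lemma mu0_pos e : e \in mu0 -> 0 < x e.
Proof. by rewrite inE => /andP []. Qed.

Lemma mu0_top e f : e \in mu0 -> inc f (ends e).1 -> 0 < x f ->
  ~~ spref (ends e).1 f e.
Proof.
rewrite inE => /andP [He /eqP HU] Hf Hxf; apply/negP => Hfe.
have := term_le (Q := fun f => spref (ends e).1 f e) H0 Hf Hfe.
by rewrite -/(Us x _ e) HU; lra.
Qed.

Lemma U_eq_L e : 0 < x e -> Us x (ends e).1 e = Ls x (ends e).2 e.
Proof.
move=> He; have [A B] := Ht He.
have := part x (inc_b e); rewrite (Xs_one (inc_b e) He) A.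
by move: B; rewrite /SU; lra.
Qed.

Lemma mu0_bot e f : e \in mu0 -> inc f (ends e).2 -> 0 < x f ->
  ~~ spref (ends e).2 e f.
Proof.
move=> Hm Hf Hxf; have := Hm; rewrite inE => /andP [He /eqP HU].
apply/negP => Hfe.
have := term_le (Q := fun f => spref (ends e).2 e f) H0 Hf Hfe.
by rewrite -/(Ls x _ e) -U_eq_L // HU; lra.
Qed.

Lemma mu0_char_top e : 0 < x e ->
  (forall f, inc f (ends e).1 -> 0 < x f -> ~~ spref (ends e).1 f e) -> e \in mu0.
Proof.
move=> He H; rewrite inE He /=; apply/eqP; apply: sum0_terms => f Hf Hfe.
apply/eqP; rewrite eq_le H0 andbT leNgt; apply/negP => Hxf.
by move: (H f Hf Hxf); rewrite Hfe.
Qed.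

Lemma mu0_char_bot e : 0 < x e ->
  (forall f, inc f (ends e).2 -> 0 < x f -> ~~ spref (ends e).2 e f) -> e \in mu0.
Proof.
move=> He H; rewrite inE He /= U_eq_L //; apply/eqP; apply: sum0_terms => f Hf Hfe.
apply/eqP; rewrite eq_le H0 andbT leNgt; apply/negP => Hxf.
by move: (H f Hf Hxf); rewrite Hfe.
Qed.

Lemma mu0_uniq v e f : e \in mu0 -> f \in mu0 -> inc e v -> inc f v -> e = f.
Proof.
move=> Hme Hmf Hev Hfv.
have Hxe := mu0_pos Hme; have Hxf := mu0_pos Hmf.
case: (boolP (inV1 v)) => Hv.
  have Ee := inc1 Hev Hv; have Ef := inc1 Hfv Hv.
  have A := mu0_top (f:=f) Hme (ltac:(by rewrite Ee)) Hxf.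
  have B := mu0_top (f:=e) Hmf (ltac:(by rewrite Ef)) Hxe.
  rewrite Ee in A; rewrite Ef in B.
  have : ipref v f e.
    by have := trich Hfv Hev; rewrite (negbTE A) (negbTE B) /= orbF.
  by move/(no_tie Hev Hfv Hxe Hxf) => ->.
have Ee := inc2 Hev Hv; have Ef := inc2 Hfv Hv.
have A := mu0_bot (f:=f) Hme (ltac:(by rewrite Ee)) Hxf.
have B := mu0_bot (f:=e) Hmf (ltac:(by rewrite Ef)) Hxe.
rewrite Ee in A; rewrite Ef in B.
have : ipref v f e.
  by have := trich Hfv Hev; rewrite (negbTE A) (negbTE B) /= orbF.
by move/(no_tie Hev Hfv Hxe Hxf) => ->.
Qed.

Lemma mu0_exists v f : inc f v -> 0 < x f -> exists2 e, e \in mu0 & inc e v.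
Proof.
move=> Hf Hxf.
pose A := [set h | inc h v && (0 < x h)].
have HfA : f \in A by rewrite inE Hf Hxf.
have HA : forall h, h \in A -> inc h v /\ 0 < x h by move=> h; rewrite inE => /andP.
case: (boolP (inV1 v)) => Hv.
  have Htr : forall a b c, a \in A -> b \in A -> c \in A ->
      spref v a b -> spref v b c -> spref v a c.
    move=> a b c /HA [Ha _] /HA [Hb _] /HA [Hc _]; exact: spref_trans.
  have [e He Hmax] := exists_max Htr (@spref_irr v) HfA.
  have [Hev Hxe] := HA e He; have Ee := inc1 Hev Hv.
  exists e => //; apply: mu0_char_top => // g; rewrite Ee => Hg Hxg.
  by apply: Hmax; rewrite inE Hg Hxg.
have Htr : forall a b c, a \in A -> b \in A -> c \in A ->
    spref v b a -> spref v c b -> spref v c a.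
  move=> a b c /HA [Ha _] /HA [Hb _] /HA [Hc _] H1 H2; exact: spref_trans H2 H1.
have [e He Hmax] := exists_max Htr (@spref_irr v) HfA.
have [Hev Hxe] := HA e He; have Ee := inc2 Hev Hv.
exists e => //; apply: mu0_char_bot => // g; rewrite Ee => Hg Hxg.
by apply: Hmax; rewrite inE Hg Hxg.
Qed.

Definition mv v := [pick e in mu0 | inc e v].
Definition chi : E -> R := fun e => (e \in mu0)%:R.
Definition del := \big[Num.min/1]_(e in mu0) x e.

Lemma del_pos : 0 < del.
Proof. apply: lt_bigmin => // e He; exact: mu0_pos. Qed.
Lemma del_le1 : del <= 1.
Proof. exact: bigmin_le_id. Qed.
Lemma del_le e : e \in mu0 -> del <= x e.
Proof. move=> H; exact: bigmin_le_cond. Qed.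

Lemma mv_some v t : mv v = Some t -> t \in mu0 /\ inc t v.
Proof. by rewrite /mv; case: pickP => // t' /andP [H1 H2] [<-]. Qed.
Lemma mv_none v : mv v = None -> forall e, e \in mu0 -> ~~ inc e v.
Proof.
rewrite /mv; case: pickP => // Hn _ e He; have := Hn e; rewrite /= He /=.
by move=> ->.
Qed.
Lemma mv_none_zero v : mv v = None -> forall f, inc f v -> x f = 0.
Proof.
move=> Hm f Hf; apply/eqP; rewrite eq_le H0 andbT leNgt; apply/negP => Hxf.
have [e He Hev] := mu0_exists Hf Hxf.
by move: (mv_none Hm He); rewrite Hev.
Qed.

Lemma chi_sum v (P : pred E) :
  \sum_(f | inc f v && P f) chi f = if mv v is Some t then (P t)%:R else 0.
Proof.
case Hm: (mv v) => [t|].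
  have [Htm Hv] := mv_some Hm.
  have Hz : forall f, inc f v -> f != t -> chi f = 0.
    move=> f Hf Hne; rewrite /chi; case: (boolP (f \in mu0)) => Hmf //.
    by rewrite (mu0_uniq Hmf Htm Hf Hv) eqxx in Hne.
  case: (boolP (P t)) => HP.
    rewrite (bigD1 t) /=; last by rewrite Hv HP.
    rewrite /chi Htm big1 ?addr0 // => f /andP [/andP [Hf _] Hne].
    exact: Hz.
  apply: big1 => f /andP [Hf HPf]; apply: Hz => //.
  by apply/eqP => Eft; rewrite -Eft HPf in HP.
apply: big1 => f /andP [Hf _]; rewrite /chi; case: (boolP (f \in mu0)) => Hmf //.
by move: (mv_none Hm Hmf); rewrite Hf.
Qed.

Lemma chi_g_t v g t : mv v = Some t -> inc g v -> t != g -> chi g = 0.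
Proof.
move=> Hm Hg Hne; have [Htm Hv] := mv_some Hm; rewrite /chi.
case: (boolP (g \in mu0)) => Hmg //.
by rewrite (mu0_uniq Hmg Htm Hg Hv) eqxx in Hne.
Qed.

Lemma pos_or0 f : 0 < x f \/ x f = 0.
Proof. by have := H0 f; rewrite le_eqVlt => /orP [/eqP ->|]; [right|left]. Qed.

Lemma case_a g : let a := (ends g).1 in
  [/\ Us x a g = 0, Ts x a g = 0, x g = 0, Us chi a g = 0 & Ts chi a g = 0 /\ chi g = 0] \/
  [/\ del <= Us x a g, Us chi a g = 1, Ts chi a g = 0 & chi g = 0] \/
  [/\ Us x a g = 0, del <= Ts x a g, Us chi a g = 0, Ts chi a g = 1 & (chi g = 1 \/ x g = 0)] \/
  [/\ Us x a g = 0, Ts x a g = 0, Us chi a g = 0, Ts chi a g = 0 & chi g = 0].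
Proof.
move=> a; have Hga : inc g a := inc_a g.
rewrite /Us /Ts !chi_sum.
case Hm: (mv a) => [t|]; last first.
  left; have Z := mv_none_zero Hm.
  have Hc : chi g = 0.
    rewrite /chi; case: (boolP (g \in mu0)) => Hmg //.
    by move: (mv_none Hm Hmg); rewrite Hga.
  split => //; try (by apply: sum0_terms => f Hf _; apply: Z); exact: Z.
have [Hmt Hta] := mv_some Hm; have Hxt := mu0_pos Hmt.
have Ete : (ends t).1 = a := inc1 Hta (inV1a g).
have top : forall f, inc f a -> 0 < x f -> ~~ spref a f t.
  by move=> f Hf Hxf; have := mu0_top (f := f) Hmt; rewrite Ete; apply.
have Hdt := del_le Hmt.
have := trich Hta Hga; case: (boolP (spref a t g)) => H1 /=.
  right; left; split.
  - apply: le_trans Hdt _; exact: term_le H0 Hta H1.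
  - by [].
  - by rewrite (negbTE (spref_ipref H1)).
  - apply: (chi_g_t Hm Hga); apply/eqP => Etg; rewrite Etg in H1.
    by rewrite (negbTE (spref_irr _ _)) in H1.
case: (boolP (ipref a t g)) => H2 /= H3.
  have HU : \sum_(f | inc f a && spref a f g) x f = 0.
    apply: sum0_terms => f Hf Hfg; case: (pos_or0 f) => // Hxf.
    have := top f Hf Hxf.
    by rewrite (spref_ipref_trans Hf Hga Hta Hfg) // ipref_sym.
  right; right; left; split => //.
  - apply: le_trans Hdt _; exact: term_le H0 Hta H2.
  - case: (pos_or0 g) => Hxg; [left | by right].
    by rewrite /chi (_ : g \in mu0) // inE Hxg /= -/a; apply/eqP.
right; right; right; split.
- apply: sum0_terms => f Hf Hfg; case: (pos_or0 f) => // Hxf.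
  by have := top f Hf Hxf; rewrite (spref_trans Hf Hga Hta Hfg H3).
- apply: sum0_terms => f Hf Hfg; case: (pos_or0 f) => // Hxf.
  by have := top f Hf Hxf; rewrite (ipref_spref_trans Hf Hga Hta Hfg H3).
- by rewrite ?(negbTE (spref_asym H3)).
- by [].
- apply: (chi_g_t Hm Hga); apply/eqP => Etg; rewrite Etg in H3.
  by rewrite (negbTE (spref_irr _ _)) in H3.
Qed.

Lemma case_b g : let b := (ends g).2 in
  [/\ Us x b g = 0, Ts x b g = 0, x g = 0, Us chi b g = 0 & Ts chi b g = 0 /\ chi g = 0] \/
  [/\ Us x b g = 1, Us chi b g = 1, Ts chi b g = 0 & chi g = 0] \/
  [/\ Us x b g + Ts x b g = 1, del <= Ts x b g, Us chi b g = 0 & Ts chi b g = 1] \/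
  [/\ Us x b g + Ts x b g <= 1 - del, Us chi b g = 0, Ts chi b g = 0 & chi g = 0].
Proof.
move=> b; have Hgb : inc g b := inc_b g.
rewrite /Us /Ts !chi_sum.
case Hm: (mv b) => [t|]; last first.
  left; have Z := mv_none_zero Hm.
  have Hc : chi g = 0.
    rewrite /chi; case: (boolP (g \in mu0)) => Hmg //.
    by move: (mv_none Hm Hmg); rewrite Hgb.
  split => //; try (by apply: sum0_terms => f Hf _; apply: Z); exact: Z.
have [Hmt Htb] := mv_some Hm; have Hxt := mu0_pos Hmt.
have Etb : (ends t).2 = b := inc2 Htb (ninV1b g).
have bot : forall f, inc f b -> 0 < x f -> ~~ spref b t f.
  by move=> f Hf Hxf; have := mu0_bot (f := f) Hmt; rewrite Etb; apply.
have Hdt := del_le Hmt.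
have HP := part x Hgb; rewrite (Xs_one Htb Hxt) in HP.
move: HP; rewrite /Us /Ts /Ls => HP.
have := trich Htb Hgb; case: (boolP (spref b t g)) => H1 /=.
  have HT0 : \sum_(f | inc f b && ipref b f g) x f = 0.
    apply: sum0_terms => f Hf Hfg; case: (pos_or0 f) => // Hxf.
    have := bot f Hf Hxf.
    by rewrite (spref_ipref_trans Htb Hgb Hf H1) // ipref_sym.
  have HL : \sum_(f | inc f b && spref b g f) x f = 0.
    apply: sum0_terms => f Hf Hfg; case: (pos_or0 f) => // Hxf.
    by have := bot f Hf Hxf; rewrite (spref_trans Htb Hgb Hf H1 Hfg).
  right; left; split.
  - by rewrite HP HT0 HL !addr0.
  - by [].
  - by rewrite (negbTE (spref_ipref H1)).
  - apply: (chi_g_t Hm Hgb); apply/eqP => Etg; rewrite Etg in H1.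
    by rewrite (negbTE (spref_irr _ _)) in H1.
case: (boolP (ipref b t g)) => H2 /= H3.
  have HL : \sum_(f | inc f b && spref b g f) x f = 0.
    apply: sum0_terms => f Hf Hfg; case: (pos_or0 f) => // Hxf.
    by have := bot f Hf Hxf; rewrite (ipref_spref_trans Htb Hgb Hf H2 Hfg).
  right; right; left; split => //.
  - by rewrite HP HL addr0.
  - apply: le_trans Hdt _; exact: term_le H0 Htb H2.
have HL := term_le (Q := fun f => spref b g f) H0 Htb H3.
right; right; right; split.
- rewrite HP; lra.
- by rewrite ?(negbTE (spref_asym H3)).
- by [].
- apply: (chi_g_t Hm Hgb); apply/eqP => Etg; rewrite Etg in H3.
  by rewrite (negbTE (spref_irr _ _)) in H3.
Qed.

Lemma chi01 g : chi g = 0 \/ chi g = 1.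
Proof. by rewrite /chi; case: (g \in mu0); [right|left]. Qed.
Lemma chi_le g : del * chi g <= x g.
Proof.
rewrite /chi; case: (boolP (g \in mu0)) => Hg; last by rewrite mulr0 H0.
by rewrite mulr1 del_le.
Qed.

Ltac finish_cases CA CB Gc :=
  case: CA => [[A1 A2 A3 A4 [A5 A6]]|[[A1 A2 A3 A4]|[[A1 A2 A3 A4 [A5|A5]]|[A1 A2 A3 A4 A5]]]];
  case: CB => [[B1 B2 B3 B4 [B5 B6]]|[[B1 B2 B3 B4]|[[B1 B2 B3 B4]|[B1 B2 B3 B4]]]];
  case: Gc => Gc; subst; split; lra.

Lemma cons_E1 g : g \in E1 ->
  (1 <= chi g + SU chi g) /\ (1 - del <= (x g + SU x g) - del * (chi g + SU chi g)).
Proof.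
move=> Hg; have [_ _ H2 _] := (inS_unf x).1 HS.
have Hc := H2 g Hg.
have G1 := H0 g; have G2 := Ts_ge H0 (inc_a g); have G3 := Ts_ge H0 (inc_b g).
have Gc := chi01 g; have G5 := chi_le g; have D1 := del_pos; have D2 := del_le1.
have CA := case_a g; have CB := case_b g.
move: Hc; rewrite /SU /= in CA CB * => Hc.
set ua := Us x (ends g).1 g in CA Hc G2 *; set ta := Ts x (ends g).1 g in CA G2 *.
set ub := Us x (ends g).2 g in CB Hc *; set tb := Ts x (ends g).2 g in CB G3 *.
set uca := Us chi (ends g).1 g in CA *; set tca := Ts chi (ends g).1 g in CA *.
set ucb := Us chi (ends g).2 g in CB *; set tcb := Ts chi (ends g).2 g in CB *.
set cg := chi g in CA CB Gc G5 *; set xg := x g in CA CB G1 G2 G3 G5 Hc *.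
clearbody ua ta ub tb uca tca ucb tcb cg xg.
finish_cases CA CB Gc.
Qed.

Lemma cons_E2 g v : g \notin E1 -> inc g v ->
  (1 <= Ts chi v g + SU chi g) /\
  (1 - del <= (Ts x v g + SU x g) - del * (Ts chi v g + SU chi g)).
Proof.
move=> Hg Hv; have [_ _ _ H3] := (inS_unf x).1 HS.
have Hc := H3 g v Hg Hv.
have G1 := H0 g; have G2 := Ts_ge H0 (inc_a g); have G3 := Ts_ge H0 (inc_b g).
have Gc := chi01 g; have G5 := chi_le g; have D1 := del_pos; have D2 := del_le1.
have CA := case_a g; have CB := case_b g.
move: Hc; rewrite /SU /= in CA CB * => Hc.
case/orP: Hv => /eqP Ev; rewrite -Ev in Hc *.
  set ua := Us x (ends g).1 g in CA Hc G2 *; set ta := Ts x (ends g).1 g in CA Hc G2 *.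
  set ub := Us x (ends g).2 g in CB Hc *; set tb := Ts x (ends g).2 g in CB G3 *.
  set uca := Us chi (ends g).1 g in CA *; set tca := Ts chi (ends g).1 g in CA *.
  set ucb := Us chi (ends g).2 g in CB *; set tcb := Ts chi (ends g).2 g in CB *.
  set cg := chi g in CA CB Gc G5 *; set xg := x g in CA CB G1 G2 G3 G5 Hc *.
  clearbody ua ta ub tb uca tca ucb tcb cg xg.
  finish_cases CA CB Gc.
set ua := Us x (ends g).1 g in CA Hc G2 *; set ta := Ts x (ends g).1 g in CA G2 *.
set ub := Us x (ends g).2 g in CB Hc *; set tb := Ts x (ends g).2 g in CB Hc G3 *.
set uca := Us chi (ends g).1 g in CA *; set tca := Ts chi (ends g).1 g in CA *.
set ucb := Us chi (ends g).2 g in CB *; set tcb := Ts chi (ends g).2 g in CB *.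
set cg := chi g in CA CB Gc G5 *; set xg := x g in CA CB G1 G2 G3 G5 Hc *.
clearbody ua ta ub tb uca tca ucb tcb cg xg.
finish_cases CA CB Gc.
Qed.

Lemma Xs_chi v : Xs chi v = if mv v is Some _ then 1 else 0.
Proof.
transitivity (\sum_(f | inc f v && xpredT f) chi f).
  by apply: eq_bigl => f; rewrite andbT.
by rewrite chi_sum; case: (mv v).
Qed.

Lemma Xs_x v : Xs x v = if mv v is Some _ then 1 else 0.
Proof.
case Hm: (mv v) => [t|].
  by have [Ht1 Ht2] := mv_some Hm; apply: Xs_one Ht2 (mu0_pos Ht1).
by apply: big1 => f Hf; apply: mv_none_zero Hm f Hf.
Qed.

Lemma chi_inS : inS ends pref E1 chi.
Proof.
apply/inS_unf; split.
- by move=> e; rewrite /chi; case: (e \in mu0).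
- by move=> v; rewrite Xs_chi; case: (mv v).
- by move=> e He; case: (cons_E1 He).
- by move=> e v He Hv; case: (cons_E2 He Hv).
Qed.

Definition zz : E -> R := fun e => (1 - del)^-1 * x e + (- del * (1 - del)^-1) * chi e.

Lemma lin_sum2 (Q : pred E) (u w : E -> R) (k1 k2 : R) :
  \sum_(h | Q h) (k1 * u h + k2 * w h) = k1 * \sum_(h | Q h) u h + k2 * \sum_(h | Q h) w h.
Proof. by rewrite big_split /= !mulr_sumr. Qed.

Lemma scale_ok (L c : R) : del < 1 -> 1 - del <= L - del * c ->
  1 <= (1 - del)^-1 * L + (- del * (1 - del)^-1) * c.
Proof.
move=> Hd H.
have -> : (1 - del)^-1 * L + (- del * (1 - del)^-1) * c = (L - del * c) / (1 - del).
  by rewrite mulrC; ring.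
by rewrite ler_pdivlMr ?mul1r //; lra.
Qed.

Lemma zz_inS : del < 1 -> inS ends pref E1 zz.
Proof.
move=> Hd; have Hk : 0 < (1 - del)^-1 by rewrite invr_gt0; lra.
have SUz : forall g, SU zz g = (1 - del)^-1 * SU x g + (- del * (1 - del)^-1) * SU chi g.
  by move=> g; rewrite /SU /Us !lin_sum2; ring.
apply/inS_unf; split.
- move=> e; rewrite /zz.
  have -> : (1 - del)^-1 * x e + - del * (1 - del)^-1 * chi e = (x e - del * chi e) * (1 - del)^-1.
    by ring.
  by apply: mulr_ge0; [have := chi_le e; lra | lra].
- move=> v; rewrite /Xs /zz lin_sum2 -/(Xs x v) -/(Xs chi v) Xs_x Xs_chi.
  case: (mv v) => [_|]; last by rewrite !mulr0 addr0; lra.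
  rewrite !mulr1 (_ : (1 - del)^-1 + - del * (1 - del)^-1 = (1 - del) / (1 - del)); last by ring.
  by rewrite divff //; lra.
- move=> e He; have [_ H] := cons_E1 He.
  rewrite SUz /zz (_ : forall a b c d k1 k2 : R, k1 * a + k2 * b + (k1 * c + k2 * d) = k1 * (a + c) + k2 * (b + d)); last by move=> *; ring.
  exact: scale_ok.
- move=> e v He Hv; have [_ H] := cons_E2 He Hv.
  rewrite SUz /Ts lin_sum2 -/(Ts x v e) -/(Ts chi v e).
  rewrite (_ : forall a b c d k1 k2 : R, k1 * a + k2 * b + (k1 * c + k2 * d) = k1 * (a + c) + k2 * (b + d)); last by move=> *; ring.
  exact: scale_ok.
Qed.

Lemma x_is_chi : (forall (y z : E -> R) (t : R), inS ends pref E1 y -> inS ends pref E1 z ->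
    0 < t < 1 -> (forall e, x e = t * y e + (1 - t) * z e) -> forall e, y e = z e) ->
  forall e, x e = chi e.
Proof.
move=> Hext; have D1 := del_pos; have D2 := del_le1.
case: (boolP (del < 1)) => Hd.
  have Hdec : forall e, x e = del * chi e + (1 - del) * zz e.
    move=> e; rewrite /zz; field; lra.
  have Heq := Hext chi zz del chi_inS (zz_inS Hd) (ltac:(by apply/andP; split)) Hdec.
  by move=> e; rewrite Hdec Heq; ring.
have Hd1 : del = 1 by apply/eqP; rewrite eq_le D2 leNgt.
move=> e.
have Hnn : forall f, 0 <= x f - chi f by move=> f; have := chi_le f; rewrite Hd1 mul1r; lra.
have Hsum : \sum_(f | inc f (ends e).1) (x f - chi f) = 0.
  by rewrite sumrB -/(Xs x _) -/(Xs chi _) Xs_x Xs_chi subrr.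
have := psumr_eq0P (fun f _ => Hnn f) Hsum (inc_a e); lra.
Qed.

Lemma mu0_matching : matching ends mu0.
Proof.
move=> v; apply/card_le1_eqP => e f /setIdP [He1 He2] /setIdP [Hf1 Hf2].
exact: (mu0_uniq Hf1 He1 Hf2 He2).
Qed.

End P3.



Section P4.
Variable mu : {set E}.
Hypothesis Hmat : matching ends mu.
Let c : E -> R := fun e => (e \in mu)%:R.

Lemma sum_pos_ex v (P : pred E) : 0 < \sum_(f | inc f v && P f) c f ->
  exists f, [/\ f \in mu, inc f v & P f].
Proof.
move=> H; case: (pickP [pred f | [&& f \in mu, inc f v & P f]]) => [f /and3P [A B C] | Hn].
  by exists f.
rewrite big1 ?ltxx // in H => f /andP [Hf HP]; rewrite /c.
by have := Hn f; rewrite /= Hf HP !andbT => ->.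
Qed.

Lemma mu_at_some v f : f \in mu -> inc f v -> mu_at ends mu v = Some f.
Proof.
move=> Hf Hv; rewrite /mu_at; case: pickP => [f' /andP [Hf' Hv'] | Hn].
  have := Hmat v; move/card_le1_eqP => H; congr Some.
  by apply: H; rewrite inE ?Hf ?Hv ?Hf' ?Hv'.
by have := Hn f; rewrite /= Hf Hv.
Qed.

Lemma noblockU v e : inc e v -> 0 < Us c v e -> ~~ geq_opt pref v e (mu_at ends mu v).
Proof.
move=> He Hpos; have [f [Hf Hfv Hfe]] := sum_pos_ex Hpos.
rewrite (mu_at_some Hf Hfv) /=.
by case/andP: Hfe.
Qed.

Lemma stable_of_chi : inS ends pref E1 c -> nonuniformly_stable ends pref E1 mu.
Proof.
move/inS_unf=> [H0 H1 H2 H3].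
have Hc0 : forall e, e \notin mu -> c e = 0 by move=> e He; rewrite /c (negbTE He).
have HU0 : forall v e, 0 <= Us c v e by move=> v e; apply: sumr_ge0.
have SUpos : forall e, 0 < SU c e ->
    exists2 v, inc e v & 0 < Us c v e.
  move=> e; rewrite /SU => H; case: (ltrP 0 (Us c (ends e).1 e)) => Ha.
    by exists (ends e).1 => //; apply: inc_a.
  exists (ends e).2; first exact: inc_b.
  have := HU0 (ends e).1 e; lra.
split => //; split.
- move=> e He [Hnot Hgeq].
  have := H2 e He; rewrite Hc0 // add0r => H.
  have [v Hv Hpos] := SUpos e (ltac:(lra)).
  by move: (noblockU Hv Hpos); rewrite Hgeq.
- move=> e He [[Hnot Hgeq] [w [Hw Hgt]]].
  have := H3 e w He Hw => H.
  case: (ltrP 0 (SU c e)) => Hs.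
    have [v Hv Hpos] := SUpos e Hs.
    by move: (noblockU Hv Hpos); rewrite Hgeq.
  have Hpos : 0 < Ts c w e by lra.
  have [f [Hf Hfw Hfe]] := sum_pos_ex Hpos.
  move: Hgt; rewrite (mu_at_some Hf Hfw) /= /Defs.spref.
  by case/andP: Hfe => -> _; rewrite andbF.
Qed.

End P4.

Lemma final (x : E -> R) : extreme_point ends pref E1 x ->
  exists mu, nonuniformly_stable ends pref E1 mu /\ forall e, x e = (e \in mu)%:R.
Proof.
move=> Hx; have HT := phase2 Hx; case: Hx => HS Hext.
exists (mu0 x); split.
  apply: stable_of_chi; first exact: mu0_matching HS HT.
  exact: chi_inS HS HT.
exact: x_is_chi HS HT Hext.
Qed.

End Pf.

Theorem lemma4p3 (R : realType) (V E : finType) (ends : E -> V * V)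
  (inV1 : pred V) (E1 : {set E}) (pref : V -> rel E) :
  bipartite_simple ends inV1 ->
  pref_ok ends pref ->
  forall x : E -> R, extreme_point ends pref E1 x ->
  exists mu : {set E},
    nonuniformly_stable ends pref E1 mu /\
    (forall e, x e = (e \in mu)%:R).
Proof.
move=> Hb Hp x Hx; exact: (final Hb Hp Hx).
Qed.
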